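(* Let $M=(E,r)$ be a polymatroid with $|E|\ge2$ and let $a\in E$. Let $\underline k$ and $\overline k$ be the minimum and maximum of $p_a$ over $p\in P(M)$. Then \[ Q'_M(x,y)=(x-1)\,Q'_{M\setminus a}(x,y)+(y-1)\,Q'_{M/a}(x,y)+\sum_{k=\underline k}^{\overline k}Q'_{N_k}(x,y), \] where the sum ranges over all $a$-slices $N_k$, $\underline k\le k\le\overline k$ (including the deletion slice $k=\underline k$ and contraction slice $k=\overline k$, each counted once; if $\underline k=\overline k$ there is a single slice).
   Context: A polymatroid $M=(E,r)$ is a function $r:2^E\to\mathbb Z_{\ge0}$ with $r(\emptyset)=0$, $r$ monotone, and $r(X\cup Y)+r(X\cap Y)\le r(X)+r(Y)$. Its bases are the $\mathbf x\in\mathbb Z^E$ with $\sum_{i\in E}x_i=r(E)$ and $\sum_{i\in S}x_i\le r(S)$ for all $S$; $P(M)$ is their convex hull. For an integer $k$ with $\underline k\le k\le\overline k$, the $a$-slice $N_k$ is the polymatroid on $E\setminus\{a\}$ whose base polytope is the image, under the coordinate projection $\mathbb R^E\to\mathbb R^{E\setminus\{a\}}$, of the convex hull of the bases $p$ of $M$ with $p_a=k$. The deletion $M\setminus a$ is the slice $N_{\underline k}$ and the contraction $M/a$ is the slice $N_{\overline k}$. For a polymatroid $N$ on nonempty $F$ with base polytope $P(N)$, let $\Delta_F=\operatorname{conv}\{\mathbf e_i:i\in F\}$, $\nabla_F=-\Delta_F$, $Q_N(t,u)=\#((P(N)+u\Delta_F+t\nabla_F)\cap\mathbb Z^F)$ for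 integers $t,u\ge0$; this is a polynomial, written $Q_N(t,u)=\sum_{i,j}c_{ij}\binom{u}{j}\binom{t}{i}$, and $Q'_N(x,y)=\sum_{i,j}c_{ij}(x-1)^i(y-1)^j$. *)

(* Defs.v *)
From HB Require Import structures.
From mathcomp Require Import all_boot all_order all_algebra.
From Stdlib Require List.
Set Implicit Arguments. Unset Strict Implicit. Unset Printing Implicit Defensive.
Import Order.TTheory GRing.Theory Num.Theory.
Local Open Scope ring_scope.

Definition polymatroid (E : finType) (r : {set E} -> nat) : Prop :=
  r set0 = 0%N /\
  (forall A B : {set E}, A \subset B -> (r A <= r B)%N) /\
  (forall A B : {set E}, (r (A :|: B) + r (A :&: B) <= r A + r B)%N).

Definition isBase (E : finType) (r : {set E} -> nat) (x : E -> int) : Prop :=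
  \sum_(i : E) x i = (r setT)%:Z /\
  (forall S : {set E}, \sum_(i in S) x i <= (r S)%:Z).

Definition conv (T : finType) (B : (T -> int) -> Prop) (y : T -> rat) : Prop :=
  exists s : seq (rat * (T -> int)),
    (forall wp, List.In wp s -> 0 <= wp.1 /\ B wp.2) /\
    \sum_(wp <- s) wp.1 = 1 /\
    (forall i, y i = \sum_(wp <- s) wp.1 * (wp.2 i)%:~R).

Definition basePolytope (E : finType) (r : {set E} -> nat) : (E -> rat) -> Prop :=
  conv (isBase r).

Definition minus_pt (E : finType) (a : E) : finType := {x : E | x != a}.

Definition slicePolytope (E : finType) (r : {set E} -> nat) (a : E) (k : int)
  : (minus_pt a -> rat) -> Prop :=
  fun y => exists z : E -> rat,
    conv (fun p => isBase r p /\ p a = k) z /\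
    (forall i : minus_pt a, y i = z (val i)).

Arguments slicePolytope {E} r a k _.

Definition unitVec (T : finType) (v : T -> int) : Prop :=
  exists i : T, forall j : T, v j = (i == j)%:Z.
Definition Delta (T : finType) : (T -> rat) -> Prop := conv (@unitVec T).

Definition inMinkowski (T : finType) (P : (T -> rat) -> Prop) (t u : nat)
  (x : {ffun T -> int}) : Prop :=
  exists p d e : T -> rat,
    P p /\ Delta d /\ Delta e /\
    (forall i, (x i)%:~R = p i + u%:R * d i + t%:R * (- e i)).

Definition latticeCount (T : finType) (P : (T -> rat) -> Prop) (t u n : nat) : Prop :=
  exists s : seq {ffun T -> int},
    uniq s /\ size s = n /\ (forall x, x \in s <-> inMinkowski P t u x).

(* Bivariate polynomials: {poly {poly int}}; the variable x is the inner
   variable ('X%:P) and y is the outer variable ('X). *)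
Definition Qx1 : {poly {poly int}} := ('X - 1)%:P.
Definition Qy1 : {poly {poly int}} := 'X - 1.

Definition isQprime (T : finType) (P : (T -> rat) -> Prop) (Q : {poly {poly int}})
  : Prop :=
  exists (D : nat) (c : nat -> nat -> int),
    (forall t u : nat, exists n : nat, latticeCount P t u n /\
        n%:Z = \sum_(i < D) \sum_(j < D) c i j * ('C(u, j))%:Z * ('C(t, i))%:Z) /\
    Q = \sum_(i < D) \sum_(j < D) (c i j)%:P%:P * Qx1 ^+ i * Qy1 ^+ j.

(* Main.v *)
Require Import Defs.
From HB Require Import structures.
From mathcomp Require Import all_boot all_order all_algebra.
From mathcomp Require Import zify ring lra.
From Stdlib Require Import IndefiniteDescription.
Set Implicit Arguments. Unset Strict Implicit. Unset Printing Implicit Defensive.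
Import Order.TTheory GRing.Theory Num.Theory.
Local Open Scope ring_scope.


Definition Sset (F : finType) (g : {set F} -> int) (N : int) (t u : nat) (x : F -> int) : Prop :=
  \sum_(i : F) x i = N + u%:Z - t%:Z /\
  forall S : {set F}, S != setT -> \sum_(i in S) x i <= g S + u%:Z.

Definition submod (F : finType) (g : {set F} -> int) :=
  forall A B : {set F}, g (A :|: B) + g (A :&: B) <= g A + g B.

Lemma sum_setT (F : finType) (x : F -> int) : \sum_(i in [set: F]) x i = \sum_i x i.
Proof. by apply: eq_bigl => i; rewrite in_setT. Qed.

Lemma sumUI (F : finType) (x : F -> int) (A B : {set F}) :
  \sum_(i in A :|: B) x i + \sum_(i in A :&: B) x i = \sum_(i in A) x i + \sum_(i in B) x i.
Proof.
rewrite !(big_mkcond (fun i => i \in _)) -!big_split /=; apply: eq_bigr => i _.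
rewrite in_setU in_setI; case: (i \in A); case: (i \in B) => /=; rewrite ?addr0 ?add0r //.
Qed.

Lemma sum_delta (F : finType) (i : F) (S : {set F}) :
  \sum_(j in S) ((i == j)%:Z : int) = (i \in S)%:Z.
Proof.
case iS: (i \in S).
  rewrite (bigD1 i) //= eqxx big1 ?addr0 // => j /andP[_ ne].
  by rewrite eq_sym (negbTE ne).
by rewrite big1 // => j jS; case: eqP => // ij; rewrite ij jS in iS.
Qed.

Lemma sum_subd (F : finType) (x : F -> int) (i : F) (S : {set F}) :
  \sum_(j in S) (x j - (i == j)%:Z) = \sum_(j in S) x j - (i \in S)%:Z.
Proof. by rewrite big_split /= sumrN sum_delta. Qed.

Lemma sum_addd (F : finType) (x : F -> int) (i : F) (S : {set F}) :
  \sum_(j in S) (x j + (i == j)%:Z) = \sum_(j in S) x j + (i \in S)%:Z.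
Proof. by rewrite big_split /= sum_delta. Qed.

Lemma sum_subdT (F : finType) (x : F -> int) (i : F) :
  \sum_j (x j - (i == j)%:Z) = \sum_j x j - 1.
Proof. by rewrite -!sum_setT sum_subd in_setT. Qed.

Lemma sum_adddT (F : finType) (x : F -> int) (i : F) :
  \sum_j (x j + (i == j)%:Z) = \sum_j x j + 1.
Proof. by rewrite -!sum_setT sum_addd in_setT. Qed.

Lemma setI_neqT (F : finType) (S T : {set F}) : S != setT -> S :&: T != setT.
Proof.
move=> hS; apply/negP => /eqP h; move/negP: hS; apply; rewrite -subTset -h.
exact: subsetIl.
Qed.

Lemma tight_cap (F : finType) g N t u (x : F -> int) S T :
  submod g -> N <= g setT -> Sset g N t u x ->
  S != setT -> T != setT ->
  \sum_(i in S) x i = g S + u%:Z -> \sum_(i in T) x i = g T + u%:Z ->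
  \sum_(i in S :&: T) x i = g (S :&: T) + u%:Z.
Proof.
move=> hg hN [hsum hb] hS hT eS eT.
have h := sumUI x S T; have sub := hg S T.
have hI := hb _ (setI_neqT T hS).
case: (S :|: T =P setT) => [E|ne].
  rewrite E sum_setT hsum in h; rewrite E in sub. lia.
have hU := hb _ (introN eqP ne). lia.
Qed.

Lemma tight_cup (F : finType) g N t (x : F -> int) S T :
  submod g -> N <= g setT -> Sset g N t.+1 0 x ->
  S != setT -> T != setT ->
  \sum_(i in S) x i = g S -> \sum_(i in T) x i = g T ->
  S :|: T != setT /\ \sum_(i in S :|: T) x i = g (S :|: T).
Proof.
move=> hg hN [hsum hb] hS hT eS eT.
have h := sumUI x S T; have sub := hg S T.
have hI := hb _ (setI_neqT T hS).
case: (S :|: T =P setT) => [E|ne].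
  rewrite E sum_setT hsum in h; rewrite E in sub. exfalso. lia.
split; first exact/eqP.
have hU := hb _ (introN eqP ne). lia.
Qed.

Lemma step_u (F : finType) (i0 : F) g N t u (x : F -> int) :
  submod g -> 0 <= g set0 -> N <= g setT -> Sset g N t u.+1 x ->
  exists i, Sset g N t u (fun j => x j - (i == j)%:Z).
Proof.
move=> hg h0 hN hx; have [hsum hb] := hx.
pose tight S := (S != setT) && (\sum_(i in S) x i == g S + u.+1%:Z).
have key : forall i, (forall S, tight S -> i \in S) ->
    Sset g N t u (fun j => x j - (i == j)%:Z).
  move=> i hi; split.
    rewrite sum_subdT hsum.
    lia.
  move=> S hS; rewrite sum_subd.
  have := hb S hS; case tS: (tight S).
    rewrite (hi _ tS) /= => le; lia.
  move: tS; rewrite /tight hS /= => /negbT hne.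
  move=> le; have lt : \sum_(i in S) x i < g S + u.+1%:Z by rewrite lt_neqAle hne le.
  case: (i \in S) => /=; lia.
case: (pickP tight) => [S1 tS1|none]; last first.
  exists i0; apply: key => S tS; by rewrite none in tS.
case: (arg_minnP (fun S : {set F} => #|S|) tS1) => S0 tS0 minS0.
have S0n0 : S0 != set0.
  apply/negP => /eqP e; move: tS0; rewrite /tight e big_set0 => /andP[_ /eqP]. lia.
have [i iS0] := set0Pn _ S0n0.
exists i; apply: key => S tS.
have tI : tight (S :&: S0).
  move: tS tS0 => /andP[nS /eqP eS] /andP[nS0 /eqP eS0].
  rewrite /tight setI_neqT //=; apply/eqP; exact: (tight_cap hg hN hx nS nS0 eS eS0).
have := minS0 _ tI => le.
have e : S :&: S0 == S0 by rewrite eqEcard subsetIr le.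
by move/eqP/setIidPr: e => /subsetP; apply.
Qed.

Lemma step_t (F : finType) (i0 : F) g N t (x : F -> int) :
  submod g -> 0 <= g set0 -> N <= g setT -> Sset g N t.+1 0 x ->
  exists i, Sset g N t 0 (fun j => x j + (i == j)%:Z).
Proof.
move=> hg h0 hN hx; have [hsum hb] := hx.
pose tight S := (S != setT) && (\sum_(i in S) x i == g S).
have key : forall i, (forall S, tight S -> i \notin S) ->
    Sset g N t 0 (fun j => x j + (i == j)%:Z).
  move=> i hi; split.
    rewrite sum_adddT hsum.
    lia.
  move=> S hS; rewrite sum_addd.
  have := hb S hS; case tS: (tight S).
    rewrite (negbTE (hi _ tS)) => le; lia.
  move: tS; rewrite /tight hS /= => /negbT hne.
  rewrite addr0 => le; have lt : \sum_(i in S) x i < g S by rewrite lt_neqAle hne le.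
  case: (i \in S) => /=; lia.
case: (pickP tight) => [S1 tS1|none]; last first.
  exists i0; apply: key => S tS; by rewrite none in tS.
case: (arg_maxnP (fun S : {set F} => #|S|) tS1) => S0 tS0 maxS0.
have [nS0 eS0] : S0 != setT /\ \sum_(i in S0) x i = g S0 by move: tS0 => /andP[? /eqP].
have [i iS0] : exists i, i \notin S0.
  case: (pickP (fun i => i \notin S0)) => [i h|h]; first by exists i.
  exfalso; move/negP: nS0; apply; apply/eqP/setP => i; rewrite in_setT.
  by have := h i => /= /negbFE.
exists i; apply: key => S tS.
move: tS => /andP[nS /eqP eS].
have [nU eU] := tight_cup hg hN hx nS nS0 eS eS0.
have tU : tight (S :|: S0) by rewrite /tight nU eU eqxx.
have := maxS0 _ tU => le.
have e : S0 == S :|: S0 by rewrite eqEcard subsetUr; exact: le.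
apply/negP => iS; move/negP: iS0; apply; rewrite (eqP e) in_setU iS //.
Qed.

Lemma descent (F : finType) (i0 : F) g N :
  submod g -> 0 <= g set0 -> N <= g setT ->
  forall u t (x : F -> int), Sset g N t u x -> exists b : F -> int, Sset g N 0 0 b /\
    exists lu lt : seq F, size lu = u /\ size lt = t /\
    forall i, x i = b i + (count_mem i lu)%:Z - (count_mem i lt)%:Z.
Proof.
move=> hg h0 hN; elim=> [|u IHu] t x hx; last first.
  have [i hi] := step_u i0 hg h0 hN hx.
  have [b [hb [lu [lt [su [st e]]]]]] := IHu _ _ hi.
  exists b; split => //; exists (i :: lu), lt; split; first by rewrite /= su.
  split => // j; have := e j; rewrite /=.
  case: (i == j) => /=; lia.
elim: t x hx => [|t IHt] x hx.
  by exists x; split => //; exists [::], [::]; split => //; split => // i /=; lia.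
have [i hi] := step_t i0 hg h0 hN hx.
have [b [hb [lu [lt [su [st e]]]]]] := IHt _ hi.
exists b; split => //; exists lu, (i :: lt); split => //; split; first by rewrite /= st.
move=> j; have := e j; rewrite /=.
case: (i == j) => /=; lia.
Qed.


Definition HasCount (T : finType) (P : {ffun T -> int} -> Prop) (n : nat) : Prop :=
  exists s : seq {ffun T -> int}, uniq s /\ size s = n /\ (forall x, x \in s <-> P x).

Lemma HC_ext (T : finType) (P Q : {ffun T -> int} -> Prop) n :
  (forall x, P x <-> Q x) -> HasCount P n -> HasCount Q n.
Proof.
move=> e [s [us [ss hs]]]; exists s; split => //; split => // x.
by rewrite hs e.
Qed.

Lemma HC_image (T U : finType) (P : {ffun T -> int} -> Prop) (f : {ffun T -> int} -> {ffun U -> int}) n :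
  injective f -> HasCount P n -> HasCount (fun y => exists x, P x /\ y = f x) n.
Proof.
move=> fi [s [us [ss hs]]]; exists (map f s); split; first by rewrite map_inj_uniq.
split; first by rewrite size_map.
move=> y; split.
  by move/mapP => [x xs ->]; exists x; split => //; apply/hs.
by move=> [x [Px ->]]; apply: map_f; apply/hs.
Qed.

Lemma HC_union (T : finType) (P : {ffun T -> int} -> Prop) (kappa : {ffun T -> int} -> int)
  (val : int -> int) (vs : seq int) :
  uniq vs ->
  (forall v, v \in vs -> exists m : nat, HasCount (fun x => P x /\ kappa x = v) m /\ m%:Z = val v) ->
  (forall x, P x -> kappa x \in vs) ->
  exists m : nat, HasCount P m /\ m%:Z = \sum_(v <- vs) val v.
Proof.
move=> uvs hv hP.
suff [m [hm em]] : exists m : nat, HasCount (fun x => P x /\ kappa x \in vs) m /\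
       m%:Z = \sum_(v <- vs) val v.
  exists m; split => //; apply: HC_ext hm => x; split; first by case.
  by move=> Px; split => //; apply: hP.
elim: vs uvs hv {hP} => [|v vs IH] /= uvs hv.
  exists 0%N; split; last by rewrite big_nil.
  by exists [::]; split => //; split => // x; split => //; case.
move/andP: uvs => [vn uvs].
have [m1 [[s1 [us1 [ss1 hs1]]] e1]] := hv v (mem_head _ _).
have [m2 [[s2 [us2 [ss2 hs2]]] e2]] : exists m : nat,
    HasCount (fun x => P x /\ kappa x \in vs) m /\ m%:Z = \sum_(v <- vs) val v.
  by apply: IH => // w wv; apply: hv; rewrite in_cons wv orbT.
exists (m1 + m2)%N; split; last by rewrite big_cons -e1 -e2 PoszD.
exists (s1 ++ s2); split.
  rewrite cat_uniq us1 us2 /= andbT; apply/hasPn => x /hs2 [_ kx].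
  apply/negP => /hs1 [_ kv]; by move: kx; rewrite kv (negbTE vn).
split; first by rewrite size_cat ss1 ss2.
move=> x; rewrite mem_cat; split.
  case/orP => [/hs1 [Px kv]|/hs2 [Px kx]]; split => //.
    by rewrite kv mem_head.
  by rewrite in_cons kx orbT.
move=> [Px]; rewrite in_cons; case/orP => [/eqP kv|kx].
  by apply/orP; left; apply/hs1.
by apply/orP; right; apply/hs2.
Qed.

Definition up (F : finType) (a : F) (S : {set minus_pt a}) : {set F} := [set val i | i in S].

Arguments up {F} a S.
Definition gk (F : finType) (a : F) (g : {set F} -> int) (k : int) (S : {set minus_pt a}) : int :=
  Order.min (g (up a S)) (g (a |: up a S) - k).
Arguments gk {F} a g k S.

Definition ext (F : finType) (a : F) (k : int) (y : minus_pt a -> int) : {ffun F -> int} :=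
  [ffun i => if insub i is Some j then y j else k].

Arguments ext {F} a k y.
Definition restr (F : finType) (a : F) (x : F -> int) : {ffun minus_pt a -> int} :=
  [ffun j => x (val j)].
Arguments restr {F} a x.

Lemma ext_val (F : finType) (a : F) k (y : minus_pt a -> int) (j : minus_pt a) : ext a k y (val j) = y j.
Proof. by rewrite ffunE valK. Qed.

Lemma ext_a (F : finType) (a : F) k (y : minus_pt a -> int) : ext a k y a = k.
Proof. by rewrite ffunE insubF // eqxx. Qed.

Lemma restr_ext (F : finType) (a : F) k (y : {ffun minus_pt a -> int}) : restr a (ext a k y) = y.
Proof. by apply/ffunP => j; rewrite ffunE ext_val. Qed.

Lemma ext_restr (F : finType) (a : F) (x : {ffun F -> int}) : ext a (x a) (restr a x) = x.
Proof.
apply/ffunP => i; rewrite ffunE; case: insubP => [j _ <-|]; first by rewrite ffunE.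
by rewrite negbK => /eqP ->.
Qed.

Lemma ext_inj (F : finType) (a : F) k : injective (fun y : {ffun minus_pt a -> int} => ext a k y).
Proof. by move=> y1 y2 e; have := congr1 (fun z : {ffun F -> int} => restr a z) e; rewrite !restr_ext. Qed.

Lemma a_notin_up (F : finType) (a : F) (S : {set minus_pt a}) : a \notin up a S.
Proof. by apply/imsetP => -[j _ e]; move: (valP j); rewrite -e eqxx. Qed.

Lemma val_in_up (F : finType) (a : F) (S : {set minus_pt a}) j : (val j \in up a S) = (j \in S).
Proof. by rewrite mem_imset //; exact: val_inj. Qed.

Lemma sum_up (F : finType) (a : F) (S : {set minus_pt a}) (f : F -> int) :
  \sum_(i in up a S) f i = \sum_(j in S) f (val j).
Proof. by rewrite big_imset //; move=> ? ? _ _; exact: val_inj. Qed.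

Lemma upU (F : finType) (a : F) (A B : {set minus_pt a}) : up a (A :|: B) = up a A :|: up a B.
Proof. exact: imsetU. Qed.

Lemma upI (F : finType) (a : F) (A B : {set minus_pt a}) : up a (A :&: B) = up a A :&: up a B.
Proof. by apply: imsetI => ? ? _ _; exact: val_inj. Qed.

Lemma up0 (F : finType) (a : F) : up a (set0 : {set minus_pt a}) = set0.
Proof. exact: imset0. Qed.

Lemma in_upT (F : finType) (a : F) i : (i \in up a (setT : {set minus_pt a})) = (i != a).
Proof.
case: (boolP (i != a)) => h.
  by have -> : i = val (Sub i h : minus_pt a) by []; rewrite val_in_up in_setT.
by rewrite negbK in h; rewrite (eqP h) (negbTE (a_notin_up _)).
Qed.

Lemma aupT (F : finType) (a : F) : a |: up a (setT : {set minus_pt a}) = setT.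
Proof. by apply/setP => i; rewrite in_setU1 in_upT in_setT; case: eqP. Qed.

Definition dn (F : finType) (a : F) (S : {set F}) : {set minus_pt a} := [set j | val j \in S].

Lemma up_dn (F : finType) (a : F) (S : {set F}) : up a (dn a S) = S :\ a.
Proof.
apply/setP => i; rewrite in_setD1; case: (boolP (i != a)) => h /=.
  by have -> : i = val (Sub i h : minus_pt a) by []; rewrite val_in_up inE.
by rewrite negbK in h; rewrite (eqP h) (negbTE (a_notin_up _)).
Qed.

Lemma sum_split (F : finType) (a : F) (S : {set F}) (f : F -> int) :
  \sum_(i in S) f i = \sum_(j in dn a S) f (val j) + (if a \in S then f a else 0).
Proof.
rewrite -sum_up up_dn; case: (boolP (a \in S)) => h.
  by rewrite (big_setD1 _ h) addrC.
rewrite addr0; apply: eq_bigl => i; rewrite in_setD1; case: eqP => // ->.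
by rewrite (negbTE h).
Qed.

Lemma S_cases (F : finType) (a : F) (S : {set F}) :
  S = up a (dn a S) \/ S = a |: up a (dn a S).
Proof.
rewrite up_dn; case: (boolP (a \in S)) => h; [right|left].
  by rewrite setD1K.
by apply/setP => i; rewrite in_setD1; case: eqP => // ->; rewrite (negbTE h).
Qed.


Lemma sumF (F : finType) (a : F) (x : F -> int) :
  \sum_i x i = \sum_j restr a x j + x a.
Proof.
rewrite -sum_setT (sum_split a) in_setT; congr (_ + _).
rewrite -sum_setT; apply: eq_big => j; first by rewrite !inE.
by rewrite ffunE.
Qed.

Lemma sum_upx (F : finType) (a : F) (x : F -> int) (S : {set minus_pt a}) :
  \sum_(i in up a S) x i = \sum_(j in S) restr a x j.
Proof. by rewrite sum_up; apply: eq_bigr => j _; rewrite ffunE. Qed.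

Lemma sum_aupx (F : finType) (a : F) (x : F -> int) (S : {set minus_pt a}) :
  \sum_(i in a |: up a S) x i = \sum_(j in S) restr a x j + x a.
Proof. by rewrite big_setU1 ?a_notin_up //= sum_upx addrC. Qed.

Lemma up_neqT (F : finType) (a : F) (S : {set minus_pt a}) : up a S != setT.
Proof.
by apply/negP => /eqP e; have := a_notin_up S; rewrite e in_setT.
Qed.

Lemma aup_neqT (F : finType) (a : F) (S : {set minus_pt a}) : S != setT -> a |: up a S != setT.
Proof.
move=> hS; apply/negP => /eqP e; move/negP: hS; apply; apply/eqP/setP => j.
rewrite in_setT -(val_in_up S); have : val j \in a |: up a S by rewrite e in_setT.
by rewrite in_setU1 (negbTE (valP j)).
Qed.

Lemma fiber (F : finType) (a : F) g N t u (x : F -> int) :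
  Sset g N t u x <->
  (\sum_j restr a x j + x a = N + u%:Z - t%:Z /\
   (forall S : {set minus_pt a}, S != setT -> \sum_(j in S) restr a x j <= g (up a S) + u%:Z) /\
   (forall S : {set minus_pt a}, S != setT -> \sum_(j in S) restr a x j + x a <= g (a |: up a S) + u%:Z) /\
   \sum_j restr a x j <= g (up a setT) + u%:Z).
Proof.
split.
  move=> [hs hb]; split; first by rewrite -sumF.
  split; first by move=> S _; rewrite -sum_upx; apply: hb; exact: up_neqT.
  split; first by move=> S hS; rewrite -sum_aupx; apply: hb; exact: aup_neqT.
  by rewrite -sum_setT -sum_upx; apply: hb; exact: up_neqT.
move=> [hs [h2 [h3 h4]]]; split; first by rewrite (sumF a).
move=> S hS; case: (S_cases a S) => e; rewrite e.
  rewrite sum_upx; case: (boolP (dn a S == setT)) => [/eqP ->|hn].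
    by rewrite sum_setT.
  exact: h2.
rewrite sum_aupx; apply: h3; apply/negP => /eqP h; move/negP: hS; apply.
by rewrite e h aupT.
Qed.

Lemma setUa (F : finType) (a : F) (U V : {set F}) : (a |: U) :|: (a |: V) = a |: (U :|: V).
Proof. by apply/setP => i; rewrite !inE; case: (i == a); case: (i \in U); case: (i \in V). Qed.
Lemma setIa (F : finType) (a : F) (U V : {set F}) : (a |: U) :&: (a |: V) = a |: (U :&: V).
Proof. by apply/setP => i; rewrite !inE; case: (i == a); case: (i \in U); case: (i \in V). Qed.
Lemma setUa2 (F : finType) (a : F) (U V : {set F}) : U :|: (a |: V) = a |: (U :|: V).
Proof. by apply/setP => i; rewrite !inE; case: (i == a); case: (i \in U); case: (i \in V). Qed.
Lemma setIa2 (F : finType) (a : F) (U V : {set F}) : a \notin U -> U :&: (a |: V) = U :&: V.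
Proof.
move=> h; apply/setP => i; rewrite !inE; case: eqP => [->|]; last by [].
by rewrite (negbTE h).
Qed.

Lemma gk_submod (F : finType) (a : F) g k : submod g -> submod (gk a g k).
Proof.
move=> hg A B; rewrite /gk upU upI.
set U := up a A; set V := up a B.
have aU : a \notin U by apply: a_notin_up.
have aV : a \notin V by apply: a_notin_up.
have h1 := hg U V.
have h2 := hg (a |: U) (a |: V); rewrite setUa setIa in h2.
have h3 := hg U (a |: V); rewrite setUa2 setIa2 // in h3.
have h4 := hg V (a |: U); rewrite setUa2 setIa2 // (setUC V U) (setIC V U) in h4.
lia.
Qed.

Lemma gk_0 (F : finType) (a : F) g k : 0 <= g set0 -> k <= g [set a] -> 0 <= gk a g k set0.
Proof. by rewrite /gk up0 setU0 => h1 h2; lia. Qed.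

Lemma gk_T (F : finType) (a : F) g N k : N <= g setT -> N - g (up a setT) <= k ->
  N - k <= gk a g k setT.
Proof. by rewrite /gk aupT => h1 h2; lia. Qed.

Lemma factA (F : finType) (a : F) g N : submod g -> N <= g setT ->
  forall S, g (up a S) + (N - g (up a setT)) <= g (a |: up a S).
Proof.
move=> hg hN S; have := hg (a |: up a S) (up a setT).
have -> : (a |: up a S) :|: up a setT = setT.
  by apply/setP => i; rewrite in_setU in_setU1 in_upT in_setT; case: eqP => //= _; rewrite orbT.
have -> : (a |: up a S) :&: up a setT = up a S.
  apply/setP => i; rewrite in_setI in_setU1 in_upT; case: eqP => [->|_] /=.
    by rewrite (negbTE (a_notin_up S)).
  by rewrite andbT.
lia.
Qed.

Lemma factB (F : finType) (a : F) g : submod g -> 0 <= g set0 ->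
  forall S : {set minus_pt a}, g (a |: up a S) <= g [set a] + g (up a S).
Proof.
move=> hg h0 S; have := hg [set a] (up a S).
have -> : [set a] :&: up a S = set0.
  apply/setP => i; rewrite !inE; case: eqP => [->|] //=.
  by rewrite (negbTE (a_notin_up S)).
lia.
Qed.

Lemma factC (F : finType) (a : F) g N : submod g -> 0 <= g set0 -> N <= g setT ->
  N <= g (up a setT) + g [set a].
Proof. move=> hg h0 hN; have := @factB F a g hg h0 setT; rewrite aupT; lia. Qed.


Lemma piece_mid (F : finType) (a : F) g N t u (x : F -> int) :
  N <= g setT -> N - g (up a setT) <= x a ->
  Sset g N t u x <-> Sset (gk a g (x a)) (N - x a) t u (restr a x).
Proof.
move=> hN hk; rewrite (fiber a); rewrite /Sset /gk; split.
  move=> [hs [h2 [h3 h4]]]; split; first lia.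
  move=> S hS; have := h2 S hS; have := h3 S hS; lia.
move=> [hs hb]; split; first lia.
split; first by move=> S hS; have := hb S hS; lia.
split; first by move=> S hS; have := hb S hS; lia.
lia.
Qed.

Lemma piece_low (F : finType) (a : F) g N t u (x : F -> int) (j : nat) :
  submod g -> N <= g setT -> (j <= t)%N ->
  x a = N - g (up a setT) - j%:Z ->
  Sset g N t u x <-> Sset (gk a g (N - g (up a setT))) (N - (N - g (up a setT))) (t - j)%N u (restr a x).
Proof.
move=> hg hN hj hx; have fA := @factA F a g N hg hN; rewrite (fiber a); rewrite /Sset /gk; split.
  move=> [hs [h2 [h3 h4]]]; split; first lia.
  move=> S hS; have := h2 S hS; have := h3 S hS; have := fA S; lia.
move=> [hs hb]; split; first lia.
split; first by move=> S hS; have := hb S hS; lia.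
split; first by move=> S hS; have := hb S hS; lia.
lia.
Qed.

Lemma piece_high (F : finType) (a : F) g N t u (x : F -> int) (j : nat) :
  submod g -> 0 <= g set0 -> N <= g setT -> (j <= u)%N ->
  x a = g [set a] + j%:Z ->
  Sset g N t u x <-> Sset (gk a g (g [set a])) (N - g [set a]) t (u - j)%N (restr a x).
Proof.
move=> hg h0 hN hj hx; have fB := @factB F a g hg h0; have fC := @factC F a g N hg h0 hN.
rewrite (fiber a); rewrite /Sset /gk; split.
  move=> [hs [h2 [h3 h4]]]; split; first lia.
  move=> S hS; have := h2 S hS; have := h3 S hS; have := fB S; lia.
move=> [hs hb]; split; first lia.
split; first by move=> S hS; have := hb S hS; have := fB S; lia.
split; first by move=> S hS; have := hb S hS; have := fB S; lia.
lia.
Qed.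

Lemma range_a (F : finType) (a : F) g N t u (x : F -> int) :
  (1 < #|F|)%N -> Sset g N t u x ->
  N - g (up a setT) - t%:Z <= x a <= g [set a] + u%:Z.
Proof.
move=> hF hx; have hx' := hx; move: hx' => [_ hb].
have : [set a] != setT.
  apply/negP => /eqP e; move: hF; rewrite -cardsT -e cards1.
  by [].
move/hb; rewrite big_set1 => h1.
move: hx; rewrite (fiber a) => -[hs [_ [_ h4]]]; lia.
Qed.

Lemma HC_piece (F : finType) (a : F) (P : {ffun F -> int} -> Prop)
  (Q : {ffun minus_pt a -> int} -> Prop) v m :
  (forall x : {ffun F -> int}, x a = v -> (P x <-> Q (restr a x))) ->
  HasCount Q m -> HasCount (fun x => P x /\ x a = v) m.
Proof.
move=> e hQ; have := HC_image (@ext_inj F a v) hQ; apply: HC_ext => x; split.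
  move=> [y [Qy ->]]; rewrite ext_a; split => //.
  by apply/e; rewrite ?ext_a ?restr_ext.
move=> [Px xa]; exists (restr a x); split; first by apply/e.
by rewrite -xa ext_restr.
Qed.


Lemma step_count (F : finType) (a : F) g N (Cs : int -> nat -> nat -> int) :
  (1 < #|F|)%N -> submod g -> 0 <= g set0 -> N <= g setT ->
  (forall k, N - g (up a setT) <= k <= g [set a] -> forall t u, exists m : nat,
     HasCount (fun y : {ffun minus_pt a -> int} => Sset (gk a g k) (N - k) t u y) m /\ m%:Z = Cs k t u) ->
  forall t u, exists m : nat, HasCount (fun x : {ffun F -> int} => Sset g N t u x) m /\
    m%:Z = \sum_(i < t) Cs (N - g (up a setT)) i u + \sum_(j < u) Cs (g [set a]) t j
      + \sum_(l < (absz (g [set a] - (N - g (up a setT)))%R).+1) Cs (N - g (up a setT) + l%:Z) t u.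
Proof.
move=> hF hg h0 hN hC t u.
have := @factC F a g N hg h0 hN.
set kmin := N - g (up a setT). set kmax := g [set a] => hk.
set L := absz (kmax - kmin).
have eL : kmax = kmin + L%:Z by rewrite /L; lia.
pose n := (t + L.+1 + u)%N.
pose vs := [seq kmin - t%:Z + j%:Z | j <- index_iota 0 n].
pose val v := if v < kmin then Cs kmin (absz (v - kmin + t%:Z)%R) u
   else if v <= kmax then Cs v t u else Cs kmax t (absz (kmax + u%:Z - v)%R).
have := @HC_union F (fun x => Sset g N t u x) (fun x => x a) val vs.
have hkk : kmin <= kmax by rewrite /kmin; lia.
case.
- rewrite map_inj_uniq ?iota_uniq // => j1 j2 e; lia.
- move=> v /mapP [j jin ->]; rewrite mem_index_iota in jin.
  case: (ltnP j t) => [jt|tj].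
    pose jj := (t - j)%N.
    have tjj : (t - jj)%N = j by rewrite /jj; lia.
    have [m [hm em]] := hC kmin ltac:(by rewrite lexx hkk) j u.
    exists m; split.
      apply: (HC_piece _ hm) => x xa.
      have := @piece_low F a g N t u x jj hg hN ltac:(rewrite /jj; lia) ltac:(rewrite xa /jj; lia).
      by rewrite tjj.
    rewrite em /val ifT; last by lia.
    congr Cs; lia.
  case: (leqP j (t + L)%N) => [jL|Lj].
    have [m [hm em]] := hC (kmin - t%:Z + j%:Z) ltac:(apply/andP; split; lia) t u.
    exists m; split.
      apply: (HC_piece _ hm) => x xa.
      rewrite -xa; apply: piece_mid => //; lia.
    by rewrite em /val ifF ?ifT //; lia.
  pose jj := (j - (t + L))%N.
  have [m [hm em]] := hC kmax ltac:(by rewrite lexx hkk) t (u - jj)%N.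
  exists m; split.
    apply: (HC_piece _ hm) => x xa.
    exact: (@piece_high F a g N t u x jj hg h0 hN ltac:(rewrite /jj /n in jin *; lia) ltac:(rewrite xa /jj; lia)).
  rewrite em /val ifF; last by lia.
  rewrite ifF; last by lia.
  congr Cs; lia.
- move=> x hx; have := range_a a hF hx; rewrite -/kmin -/kmax => /andP[r1 r2].
  apply/mapP; exists (absz (x a - kmin + t%:Z)%R); last by lia.
  rewrite mem_index_iota /n; lia.
move=> m [hm em]; exists m; split => //.
have B1 : \sum_(0 <= j < t) val (kmin - t%:Z + j%:Z) = \sum_(i < t) Cs kmin i u.
  rewrite -(big_mkord xpredT (fun i => Cs kmin i u)); apply: eq_big_nat => i /andP[_ it].
  rewrite /val ifT; last by lia.
  congr Cs; lia.
have B2 : \sum_(t <= j < (t + L.+1)%N) val (kmin - t%:Z + j%:Z) = \sum_(l < L.+1) Cs (kmin + l%:Z) t u.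
  rewrite -{1}(add0n t) big_addn addKn -(big_mkord xpredT (fun l => Cs (kmin + l%:Z) t u)); apply: eq_big_nat => i /andP[_ it].
  rewrite /val ifF; last by lia.
  rewrite ifT; last by lia.
  congr Cs; lia.
have B3 : \sum_((t + L.+1)%N <= j < n) val (kmin - t%:Z + j%:Z) = \sum_(j < u) Cs kmax t j.
  rewrite -{1}(add0n (t + L.+1)%N) big_addn /n addKn -(big_mkord xpredT (fun j => Cs kmax t j)) big_nat_rev.
  apply: eq_big_nat => i /andP[_ it].
  rewrite /val ifF; last by lia.
  rewrite ifF; last by lia.
  congr Cs; lia.
rewrite em big_map (@big_cat_nat _ _ _ (t + L.+1)%N) ?leq0n /n ?leq_addr //.
rewrite (@big_cat_nat _ _ _ t) ?leq0n ?leq_addr //.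
rewrite B1 B2 -/n B3.
rewrite /= -!addrA; congr (_ + _); exact: addrC.
Qed.


Definition formula (D : nat) (c : nat -> nat -> int) (t u : nat) : int :=
  \sum_(i < D) \sum_(j < D) c i j * ('C(u, j))%:Z * ('C(t, i))%:Z.
Definition Qp (D : nat) (c : nat -> nat -> int) : {poly {poly int}} :=
  \sum_(i < D) \sum_(j < D) (c i j)%:P%:P * Qx1 ^+ i * Qy1 ^+ j.
Definition Rep (f : nat -> nat -> int) (Q : {poly {poly int}}) :=
  exists D c, (forall t u, f t u = formula D c t u) /\ Q = Qp D c.

Definition mk (D : nat) (c : nat -> nat -> int) i j : int :=
  if (i < D)%N && (j < D)%N then c i j else 0.

Lemma widen2 (V : zmodType) (D D' : nat) (G : nat -> nat -> V) : (D <= D')%N ->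
  \sum_(i < D') \sum_(j < D') (if (i < D)%N && (j < D)%N then G i j else 0) =
  \sum_(i < D) \sum_(j < D) G i j.
Proof.
move=> hD; rewrite (big_ord_widen D' (fun i => \sum_(j < D) G i j)) // [RHS]big_mkcond.
apply: eq_bigr => i _; case: (i < D)%N => /=.
  by rewrite (big_ord_widen D' (G i)) // [RHS]big_mkcond.
by rewrite big1.
Qed.

Lemma formula_mk D D' c t u : (D <= D')%N -> formula D' (mk D c) t u = formula D c t u.
Proof.
move=> hD; rewrite /formula -(widen2 (fun i j => c i j * ('C(u, j))%:Z * ('C(t, i))%:Z) hD); apply: eq_bigr => i _; apply: eq_bigr => j _.
by rewrite /mk; case: ifP => _; rewrite ?mul0r.
Qed.

Lemma Qp_mk D D' c : (D <= D')%N -> Qp D' (mk D c) = Qp D c.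
Proof.
move=> hD; rewrite /Qp -(widen2 (fun i j => (c i j)%:P%:P * Qx1 ^+ i * Qy1 ^+ j) hD); apply: eq_bigr => i _; apply: eq_bigr => j _.
by rewrite /mk; case: ifP => _; rewrite ?mul0r.
Qed.

Lemma Rep_ext f g Q : (forall t u, f t u = g t u) -> Rep f Q -> Rep g Q.
Proof. by move=> e [D [c [h1 h2]]]; exists D, c; split => // t u; rewrite -e. Qed.

Lemma Rep_add f g Q R : Rep f Q -> Rep g R -> Rep (fun t u => f t u + g t u) (Q + R).
Proof.
move=> [D1 [c1 [f1 q1]]] [D2 [c2 [f2 q2]]].
exists (maxn D1 D2), (fun i j => mk D1 c1 i j + mk D2 c2 i j); split.
  move=> t u; rewrite f1 f2 -(formula_mk c1 t u (leq_maxl D1 D2)) -(formula_mk c2 t u (leq_maxr D1 D2)).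
  rewrite /formula -big_split; apply: eq_bigr => i _; rewrite -big_split; apply: eq_bigr => j _.
  by rewrite /= !mulrDl.
rewrite q1 q2 -(Qp_mk c1 (leq_maxl D1 D2)) -(Qp_mk c2 (leq_maxr D1 D2)).
rewrite /Qp -big_split; apply: eq_bigr => i _; rewrite -big_split; apply: eq_bigr => j _.
by rewrite /= !polyCD !mulrDl.
Qed.

Lemma Rep_one : Rep (fun _ _ => 1) 1.
Proof.
exists 1%N, (fun _ _ => 1); split.
  by move=> t u; rewrite /formula !big_ord1 !bin0 !mul1r.
by rewrite /Qp !big_ord1 !expr0 !mulr1.
Qed.

Lemma Rep_zero : Rep (fun _ _ => 0) 0.
Proof.
exists 0%N, (fun _ _ => 0); split; first by move=> t u; rewrite /formula big_ord0.
by rewrite /Qp big_ord0.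
Qed.

Lemma hockey (t i : nat) : \sum_(t' < t) ('C(t', i))%:Z = ('C(t, i.+1))%:Z.
Proof.
elim: t => [|t IH]; first by rewrite big_ord0 bin0n.
by rewrite big_ord_recr /= IH binS PoszD.
Qed.

Lemma shift_i_sum (V : zmodType) D (c : nat -> nat -> int) (H : int -> nat -> nat -> V) :
  (forall i j, H 0 i j = 0) ->
  \sum_(i < D.+1) \sum_(j < D.+1) H (if nat_of_ord i is i'.+1 then mk D c i' j else 0) i j =
  \sum_(i < D) \sum_(j < D) H (c i j) i.+1 j.
Proof.
move=> H0; rewrite big_ord_recl big1 ?add0r; last by move=> j _; rewrite H0.
apply: eq_bigr => i _; rewrite lift0 /= big_ord_recr /= /mk ltnn andbF H0 addr0.
apply: eq_bigr => j _; by rewrite /= ltn_ord (ltn_ord j).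
Qed.

Lemma shift_j_sum (V : zmodType) D (c : nat -> nat -> int) (H : int -> nat -> nat -> V) :
  (forall i j, H 0 i j = 0) ->
  \sum_(i < D.+1) \sum_(j < D.+1) H (if nat_of_ord j is j'.+1 then mk D c i j' else 0) i j =
  \sum_(i < D) \sum_(j < D) H (c i j) i j.+1.
Proof.
move=> H0; rewrite big_ord_recr /=.
rewrite [X in _ + X]big1 ?addr0; last first.
  by move=> j _; case: (nat_of_ord j) => [|j'] /=; rewrite ?H0 // /mk ltnn H0.
apply: eq_bigr => i _; rewrite big_ord_recl [X in X + _]/= H0 add0r.
apply: eq_bigr => j _; by rewrite lift0 /mk /= ltn_ord (ltn_ord j).
Qed.

Lemma Rep_shift_t f Q : Rep f Q -> Rep (fun t u => \sum_(t' < t) f t' u) (Qx1 * Q).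
Proof.
move=> [D [c [f1 q1]]].
exists D.+1, (fun i j => if i is i'.+1 then mk D c i' j else 0); split.
  move=> t u; rewrite /formula.
  rewrite (@shift_i_sum _ D c (fun v i j => v * ('C(u, j))%:Z * ('C(t, i))%:Z)); last by move=> *; rewrite !mul0r.
  under eq_bigr do rewrite f1.
  rewrite /formula exchange_big; apply: eq_bigr => i _; rewrite exchange_big.
  by apply: eq_bigr => j _; rewrite -mulr_sumr hockey.
rewrite q1 /Qp.
rewrite (@shift_i_sum _ D c (fun v i j => v%:P%:P * Qx1 ^+ i * Qy1 ^+ j)); last by move=> *; rewrite !mul0r.
rewrite mulr_sumr; apply: eq_bigr => i _; rewrite mulr_sumr; apply: eq_bigr => j _.
by rewrite exprS; ring.
Qed.

Lemma Rep_shift_u f Q : Rep f Q -> Rep (fun t u => \sum_(u' < u) f t u') (Qy1 * Q).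
Proof.
move=> [D [c [f1 q1]]].
exists D.+1, (fun i j => if j is j'.+1 then mk D c i j' else 0); split.
  move=> t u; rewrite /formula.
  rewrite (@shift_j_sum _ D c (fun v i j => v * ('C(u, j))%:Z * ('C(t, i))%:Z)); last by move=> *; rewrite !mul0r.
  under eq_bigr do rewrite f1.
  rewrite /formula exchange_big; apply: eq_bigr => i _; rewrite exchange_big.
  apply: eq_bigr => j _; rewrite -mulr_suml -mulr_sumr hockey; ring.
rewrite q1 /Qp.
rewrite (@shift_j_sum _ D c (fun v i j => v%:P%:P * Qx1 ^+ i * Qy1 ^+ j)); last by move=> *; rewrite !mul0r.
rewrite mulr_sumr; apply: eq_bigr => i _; rewrite mulr_sumr; apply: eq_bigr => j _.
by rewrite exprS; ring.
Qed.

Lemma Rep_sum n (fs : nat -> nat -> nat -> int) (Qs : nat -> {poly {poly int}}) :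
  (forall i, (i < n)%N -> Rep (fs i) (Qs i)) ->
  Rep (fun t u => \sum_(i < n) fs i t u) (\sum_(i < n) Qs i).
Proof.
elim: n => [|n IH] h.
  rewrite big_ord0; apply: (Rep_ext _ Rep_zero) => t u; by rewrite big_ord0.
have H := Rep_add (IH (fun i hi => h i (ltnW hi))) (h n (ltnSn n)).
rewrite big_ord_recr /=.
apply: (Rep_ext _ H) => t u; by rewrite big_ord_recr.
Qed.


Lemma fchoice (A B : Type) (P : A -> B -> Prop) :
  (forall a, exists b, P a b) -> exists f : A -> B, forall a, P a (f a).
Proof.
move=> h; exists (fun a => proj1_sig (constructive_indefinite_description _ (h a))).
by move=> a; exact: proj2_sig.
Qed.

Lemma step_rep (F : finType) (a : F) g N (Cs : int -> nat -> nat -> int) (Qs : int -> {poly {poly int}}) :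
  (1 < #|F|)%N -> submod g -> 0 <= g set0 -> N <= g setT ->
  (forall k, N - g (up a setT) <= k <= g [set a] -> Rep (Cs k) (Qs k) /\ forall t u, exists m : nat,
     HasCount (fun y : {ffun minus_pt a -> int} => Sset (gk a g k) (N - k) t u y) m /\ m%:Z = Cs k t u) ->
  exists f, Rep f (Qx1 * Qs (N - g (up a setT)) + Qy1 * Qs (g [set a]) +
         \sum_(l < (absz (g [set a] - (N - g (up a setT)))%R).+1) Qs (N - g (up a setT) + l%:Z))
    /\ forall t u, exists m : nat, HasCount (fun x : {ffun F -> int} => Sset g N t u x) m /\ m%:Z = f t u.
Proof.
move=> hF hg h0 hN hC.
have hk := @factC F a g N hg h0 hN.
have hcount := @step_count F a g N Cs hF hg h0 hN (fun k hk' t u => proj2 (hC k hk') t u).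
eexists; split; last exact: hcount.
apply: Rep_add; first apply: Rep_add.
- apply: Rep_shift_t; apply: (proj1 (hC _ _)); rewrite lexx /=; lia.
- apply: Rep_shift_u; apply: (proj1 (hC _ _)); rewrite lexx andbT; lia.
- apply: (@Rep_sum _ (fun l => Cs (N - g (up a setT) + l%:Z)) (fun l => Qs (N - g (up a setT) + l%:Z))) => l hl.
  apply: (proj1 (hC _ _)); lia.
Qed.

Lemma card1_sum (F : finType) (i0 : F) (x : F -> int) : #|F| = 1%N -> \sum_i x i = x i0.
Proof.
move=> h; rewrite (bigD1 i0) //= big1 ?addr0 // => j ne.
have /card_le1_eqP e : (#|F| <= 1)%N by rewrite h.
by move: ne; rewrite (e j i0 isT isT) eqxx.
Qed.

Lemma main_ind (n : nat) : forall (F : finType), #|F| = n.+1 ->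
  forall g N, submod g -> 0 <= g set0 -> N <= g setT ->
  exists f Q, Rep f Q /\ forall t u, exists m : nat,
    HasCount (fun x : {ffun F -> int} => Sset g N t u x) m /\ m%:Z = f t u.
Proof.
elim: n => [|n IH] F hF g N hg h0 hN.
  have [i0 _] : exists i0 : F, i0 \in F by apply/card_gt0P; rewrite hF.
  have /card_le1_eqP e : (#|F| <= 1)%N by rewrite hF.
  have eq0 : forall j : F, j = i0 by move=> j; exact: esym (e j i0 isT isT).
  exists (fun _ _ => 1), 1; split; first exact: Rep_one.
  move=> t u; exists 1%N; split => //.
  exists [:: [ffun _ => N + u%:Z - t%:Z]]; split => //; split => // x.
  rewrite mem_seq1; split.
    move/eqP => ->; split; first by rewrite (card1_sum i0 _ hF) ffunE.
    move=> S hS; have -> : S = set0.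
      apply/setP => j; rewrite in_set0; apply/negP => jS; move/negP: hS; apply.
      apply/eqP/setP => k; rewrite in_setT (eq0 k); by rewrite -(eq0 j).
    by rewrite big_set0; lia.
  move=> [hs _]; apply/eqP/ffunP => j; rewrite ffunE (eq0 j) -hs.
  by rewrite (card1_sum i0 _ hF).
have [a _] : exists a : F, a \in F by apply/card_gt0P; rewrite hF.
have hF' : #|minus_pt a| = n.+1.
  by rewrite card_sig cardC1 hF.
have := @fchoice int ((nat -> nat -> int) * {poly {poly int}})
  (fun k p => N - g (up a setT) <= k <= g [set a] -> Rep p.1 p.2 /\ forall t u, exists m : nat,
     HasCount (fun y : {ffun minus_pt a -> int} => Sset (gk a g k) (N - k) t u y) m /\ m%:Z = p.1 t u).
case.
  move=> k; case: (boolP (N - g (up a setT) <= k <= g [set a])) => hk; last first.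
    by exists ((fun _ _ => 0), 0) => hk'; exfalso; move/negP: hk.
  move/andP: hk => [k1 k2].
  have [f [Q [hr hc]]] := IH _ hF' (gk a g k) (N - k) (gk_submod k hg) (gk_0 h0 k2) (gk_T hN k1).
  by exists (f, Q).
move=> p hp.
have [f [hr hc]] := @step_rep F a g N (fun k => (p k).1) (fun k => (p k).2) ltac:(by rewrite hF) hg h0 hN hp.
by exists f; eexists; split; [exact: hr|].
Qed.


Lemma intr_sumS (T : finType) (P : pred T) (x : T -> int) :
  ((\sum_(i | P i) x i)%:~R : rat) = \sum_(i | P i) (x i)%:~R.
Proof. by elim/big_rec2: _ => // i a b _ <-; rewrite intrD. Qed.

Lemma conv_sumS (T : finType) (B : (T -> int) -> Prop) (y : T -> rat) (s : seq (rat * (T -> int))) (P : pred T) :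
  (forall i, y i = \sum_(wp <- s) wp.1 * (wp.2 i)%:~R) ->
  \sum_(i | P i) y i = \sum_(wp <- s) wp.1 * (\sum_(i | P i) wp.2 i)%:~R.
Proof.
move=> hy; under eq_bigr do rewrite hy.
rewrite exchange_big; apply: eq_bigr => wp _; by rewrite intr_sumS mulr_sumr.
Qed.

Lemma wsum_le (T : finType) (s : seq (rat * (T -> int))) (L : (T -> int) -> int) (c : int) (B : (T -> int) -> Prop) :
  (forall wp, List.In wp s -> 0 <= wp.1 /\ B wp.2) -> (forall v, B v -> L v <= c) ->
  \sum_(wp <- s) wp.1 * (L wp.2)%:~R <= (\sum_(wp <- s) wp.1) * c%:~R.
Proof.
move=> hs hL; elim: s hs => [|wp s IH] hs; first by rewrite !big_nil mul0r.
rewrite !big_cons mulrDl; apply: lerD; last by apply: IH => w hw; apply: hs; right.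
have [h1 h2] := hs wp (or_introl erefl).
by apply: ler_wpM2l => //; rewrite ler_int; apply: hL.
Qed.

Lemma wsum_ge (T : finType) (s : seq (rat * (T -> int))) (L : (T -> int) -> int) (c : int) (B : (T -> int) -> Prop) :
  (forall wp, List.In wp s -> 0 <= wp.1 /\ B wp.2) -> (forall v, B v -> c <= L v) ->
  (\sum_(wp <- s) wp.1) * c%:~R <= \sum_(wp <- s) wp.1 * (L wp.2)%:~R.
Proof.
move=> hs hL; elim: s hs => [|wp s IH] hs; first by rewrite !big_nil mul0r.
rewrite !big_cons mulrDl; apply: lerD; last by apply: IH => w hw; apply: hs; right.
have [h1 h2] := hs wp (or_introl erefl).
by apply: ler_wpM2l => //; rewrite ler_int; apply: hL.
Qed.

Lemma conv_le (T : finType) (B : (T -> int) -> Prop) (y : T -> rat) (P : pred T) (c : int) :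
  conv B y -> (forall v, B v -> \sum_(i | P i) v i <= c) -> \sum_(i | P i) y i <= c%:~R.
Proof.
move=> [s [hs [h1 hy]]] hc; rewrite (conv_sumS B P hy).
have := @wsum_le T s (fun v => \sum_(i | P i) v i) c B hs hc; by rewrite h1 mul1r.
Qed.

Lemma conv_ge (T : finType) (B : (T -> int) -> Prop) (y : T -> rat) (P : pred T) (c : int) :
  conv B y -> (forall v, B v -> c <= \sum_(i | P i) v i) -> c%:~R <= \sum_(i | P i) y i.
Proof.
move=> [s [hs [h1 hy]]] hc; rewrite (conv_sumS B P hy).
have := @wsum_ge T s (fun v => \sum_(i | P i) v i) c B hs hc; by rewrite h1 mul1r.
Qed.

Lemma conv_eq (T : finType) (B : (T -> int) -> Prop) (y : T -> rat) (P : pred T) (c : int) :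
  conv B y -> (forall v, B v -> \sum_(i | P i) v i = c) -> \sum_(i | P i) y i = c%:~R.
Proof.
move=> hy hc; apply/eqP; rewrite eq_le (conv_le hy) ?(conv_ge hy) // => v /hc ->; exact: lexx.
Qed.

Lemma conv1 (T : finType) (B : (T -> int) -> Prop) (b : T -> int) :
  B b -> conv B (fun i => (b i)%:~R).
Proof.
move=> hb; exists [:: (1, b)]; split; first by move=> wp [<-|[]]; split.
by split; [rewrite big_cons big_nil addr0 | move=> i; rewrite big_cons big_nil addr0 mul1r].
Qed.

Lemma sum_const_seq (T : Type) (s : seq T) (c : rat) : \sum_(m <- s) c = c *+ size s.
Proof. elim: s => [|x s IH]; by rewrite ?big_nil ?big_cons ?IH ?mulrS. Qed.

Lemma sum_count_seq (T : eqType) (s : seq T) (i : T) (c : rat) :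
  \sum_(m <- s) c * (((m == i)%:Z)%:~R) = c * (count_mem i s)%:R.
Proof.
elim: s => [|x s IH]; first by rewrite big_nil mulr0.
by rewrite big_cons IH /= natrD mulrDr; case: (x == i).
Qed.

Lemma delta_of_list (T : finType) (i0 : T) (l : seq T) :
  exists d, Delta d /\ forall i, (size l)%:R * d i = (count_mem i l)%:R.
Proof.
case: l => [|j l].
  exists (fun i => ((i0 == i)%:Z)%:~R); split; last by move=> i; rewrite mul0r.
  by apply: conv1; exists i0.
set l' := j :: l; have hn : (size l')%:R != 0 :> rat by rewrite pnatr_eq0.
pose s := [seq (((size l')%:R^-1 : rat), fun k => ((m == k)%:Z)) | m <- l'].
exists (fun i => \sum_(wp <- s) wp.1 * (wp.2 i)%:~R).
split.
  exists s; split.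
    move=> wp hin; case: (proj1 (List.in_map_iff _ l' wp) hin) => m [<- _]; split; first by rewrite invr_ge0 ler0n.
    by exists m.
  split => //; rewrite big_map /= sum_const_seq /l' /= -(mulr_natr ((size l).+1%:R^-1 : rat) (size l).+1) mulVf // pnatr_eq0.
move=> i; rewrite big_map /= (sum_count_seq l' i) mulVKf //.
Qed.

Lemma sum_deltaP (T : finType) (i : T) (P : pred T) :
  \sum_(j | P j) ((i == j)%:Z : int) = (P i)%:Z.
Proof.
case iS: (P i).
  rewrite (bigD1 i) //= eqxx big1 ?addr0 // => j /andP[_ ne].
  by rewrite eq_sym (negbTE ne).
by rewrite big1 // => j jS; case: eqP => // ij; rewrite ij jS in iS.
Qed.

Lemma unit_sum (T : finType) (v : T -> int) (P : pred T) :
  unitVec v -> 0 <= \sum_(j | P j) v j <= 1.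
Proof.
move=> [i hi]; under eq_bigr do rewrite hi; rewrite sum_deltaP; by case: (P i).
Qed.

Lemma unit_sumT (T : finType) (v : T -> int) :
  unitVec v -> \sum_j v j = 1.
Proof. move=> [i hi]; under eq_bigr do rewrite hi; by rewrite sum_deltaP. Qed.

Lemma charac (T : finType) (i0 : T) g N (Pol : (T -> rat) -> Prop) :
  submod g -> 0 <= g set0 -> N <= g setT ->
  (forall y, Pol y -> \sum_i y i = N%:~R /\
     forall S : {set T}, S != setT -> \sum_(i in S) y i <= (g S)%:~R) ->
  (forall b : T -> int, Sset g N 0 0 b -> Pol (fun i => (b i)%:~R)) ->
  forall t u (x : {ffun T -> int}), inMinkowski Pol t u x <-> Sset g N t u x.
Proof.
move=> hg h0 hN hP hB t u x; split.
  move=> [p [d [e [Pp [Dd [De hx]]]]]].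
  have [Ps PS] := hP p Pp.
  have sumx : forall (Q : pred T), ((\sum_(i | Q i) x i)%:~R : rat) =
      \sum_(i | Q i) p i + u%:R * \sum_(i | Q i) d i - t%:R * \sum_(i | Q i) e i.
    move=> Q; rewrite intr_sumS; under eq_bigr do rewrite hx.
    by rewrite !big_split /= -!mulr_sumr sumrN mulrN.
  have dT : \sum_i d i = 1%:~R by apply: (conv_eq Dd) => v /unit_sumT.
  have eT : \sum_i e i = 1%:~R by apply: (conv_eq De) => v /unit_sumT.
  split.
    apply/eqP; rewrite -(eqr_int rat) sumx Ps dT eT !mulr1 intrB intrD /=.
    by rewrite !pmulrn.
  move=> S hS.
  have d1 : \sum_(i in S) d i <= 1%:~R by apply: (conv_le Dd) => v /(unit_sum (mem S)) /andP[].
  have e0 : 0%:~R <= \sum_(i in S) e i by apply: (conv_ge De) => v /(unit_sum (mem S)) /andP[].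
  have := PS S hS; rewrite -(ler_int rat) sumx intrD => h.
  have hu : u%:R * \sum_(i in S) d i <= u%:R :> rat.
    by rewrite -[X in _ <= X]mulr1; apply: ler_wpM2l => //.
  have ht : 0 <= t%:R * \sum_(i in S) e i :> rat by apply: mulr_ge0.
  rewrite pmulrn; lra.
move=> hx; have [b [hb [lu [lt [su [st e]]]]]] := descent i0 hg h0 hN hx.
have [d [Dd hd]] := delta_of_list i0 lu; have [f [Df hf]] := delta_of_list i0 lt.
exists (fun i => (b i)%:~R), d, f; split; first exact: hB.
split => //; split => // i.
rewrite e -su -st hd mulrN hf intrB intrD.
by rewrite !pmulrn.
Qed.


Lemma exists_base (T : finType) (i0 : T) g N :
  submod g -> 0 <= g set0 -> N <= g setT -> exists b : T -> int, Sset g N 0 0 b.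
Proof.
move=> hg h0 hN.
pose M : nat := (absz N + \sum_(S : {set T}) absz (g S))%N.
have hM1 : (absz N <= M)%N by rewrite leq_addr.
have hM2 : forall S, (absz (g S) <= M)%N.
  move=> S; rewrite /M (bigD1 S) //= addnA; apply: leq_trans (leq_addl _ _) _.
  exact: leq_addr.
have hT : (0 < #|T|)%N by apply/card_gt0P; exists i0.
pose t := absz (N + (M * #|T|)%N%:Z).
have eT : #|(xpredT : pred T)| = #|T| by apply: eq_card => i.
have hx : Sset g N t 0 (fun _ => - (M%:Z)).
  split.
    rewrite sumr_const -mulr_natr eT /t; nia.
  move=> S hS; rewrite sumr_const -mulr_natr.
  have := hM2 S; case: (posnP #|S|) => hS0.
    rewrite hS0 mulr0; move/eqP: hS0; rewrite cards_eq0 => /eqP ->; lia.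
  nia.
have [b [hb _]] := descent i0 hg h0 hN hx.
by exists b.
Qed.

Definition gr (E : finType) (r : {set E} -> nat) : {set E} -> int := fun S => (r S)%:Z.

Lemma gr_submod (E : finType) (r : {set E} -> nat) : polymatroid r -> submod (gr r).
Proof. move=> [_ [_ h]] A B; rewrite /gr; have := h A B; lia. Qed.

Lemma sum_setT_rat (F : finType) (y : F -> rat) : \sum_(i in [set: F]) y i = \sum_i y i.
Proof. by apply: eq_bigl => i; rewrite in_setT. Qed.

Lemma sum_up_rat (F : finType) (a : F) (S : {set minus_pt a}) (f : F -> rat) :
  \sum_(i in up a S) f i = \sum_(j in S) f (val j).
Proof. by rewrite big_imset //; move=> ? ? _ _; exact: val_inj. Qed.

Lemma base_facts (E : finType) (r : {set E} -> nat) y : basePolytope r y ->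
  \sum_i y i = ((r setT)%:Z)%:~R /\
  forall S : {set E}, S != setT -> \sum_(i in S) y i <= (gr r S)%:~R.
Proof.
move=> hy; split; first by apply: (conv_eq hy) => v [hv _].
by move=> S _; apply: (conv_le hy) => v [_ hv]; exact: hv S.
Qed.

Lemma base_ii (E : finType) (r : {set E} -> nat) (b : E -> int) :
  Sset (gr r) (r setT)%:Z 0 0 b -> basePolytope r (fun i => (b i)%:~R).
Proof.
move=> [hs hb]; apply: conv1; split; first by rewrite hs; lia.
move=> S; case: (S =P setT) => [->|/eqP ne].
  by rewrite sum_setT hs; lia.
by have := hb S ne; rewrite /gr; lia.
Qed.

Lemma slice_facts (E : finType) (r : {set E} -> nat) (a : E) k y :
  slicePolytope r a k y ->
  \sum_i y i = ((r setT)%:Z - k)%:~R /\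
  forall S : {set minus_pt a}, S != setT -> \sum_(i in S) y i <= (gk a (gr r) k S)%:~R.
Proof.
move=> [z [hz hy]].
have e : forall S : {set minus_pt a}, \sum_(i in S) y i = \sum_(i in up a S) z i.
  by move=> S; rewrite sum_up_rat; apply: eq_bigr => j _; exact: hy.
split.
  rewrite -sum_setT_rat e; apply: (conv_eq hz) => v [[hv _] va].
  have := sumF a v; rewrite hv va => h; rewrite sum_upx sum_setT; lia.
move=> S _; rewrite e; apply: (conv_le hz) => v [[hv hb] va].
have h1 := hb (up a S); have h2 := hb (a |: up a S).
rewrite sum_aupx va in h2; rewrite sum_upx in h1.
rewrite sum_upx /gk /gr; lia.
Qed.

Lemma lift_base (E : finType) (r : {set E} -> nat) (a : E) k (b : minus_pt a -> int) :
  (r setT)%:Z - (r (up a setT))%:Z <= k ->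
  Sset (gk a (gr r) k) ((r setT)%:Z - k) 0 0 b -> isBase r (ext a k b).
Proof.
move=> hk [hs hb].
have er : forall S : {set minus_pt a}, \sum_(j in S) restr a (ext a k b) j = \sum_(j in S) b j.
  by move=> S; apply: eq_bigr => j _; rewrite ffunE ext_val.
split.
  rewrite (sumF a) ext_a -sum_setT er sum_setT hs; lia.
move=> S; case: (S_cases a S) => ->.
  rewrite sum_upx er; case: (dn a S =P setT) => [->|/eqP ne].
    rewrite sum_setT hs; lia.
  have := hb _ ne; rewrite /gk /gr; lia.
rewrite sum_aupx er ext_a; case: (dn a S =P setT) => [->|/eqP ne].
  rewrite sum_setT hs aupT; lia.
have := hb _ ne; rewrite /gk /gr; lia.
Qed.

Lemma slice_ii (E : finType) (r : {set E} -> nat) (a : E) k (b : minus_pt a -> int) :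
  (r setT)%:Z - (r (up a setT))%:Z <= k ->
  Sset (gk a (gr r) k) ((r setT)%:Z - k) 0 0 b -> slicePolytope r a k (fun i => (b i)%:~R).
Proof.
move=> hk hb; exists (fun i => (ext a k b i)%:~R); split.
  by apply: (conv1 (B := fun p => isBase r p /\ p a = k)); split; [exact: lift_base | exact: ext_a].
by move=> i; rewrite ext_val.
Qed.


Lemma isQ_of (T : finType) (i0 : T) (Pol : (T -> rat) -> Prop) g N Q f :
  submod g -> 0 <= g set0 -> N <= g setT ->
  (forall y, Pol y -> \sum_i y i = N%:~R /\
     forall S : {set T}, S != setT -> \sum_(i in S) y i <= (g S)%:~R) ->
  (forall b : T -> int, Sset g N 0 0 b -> Pol (fun i => (b i)%:~R)) ->
  Rep f Q ->
  (forall t u, exists m : nat, HasCount (fun x : {ffun T -> int} => Sset g N t u x) m /\ m%:Z = f t u) ->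
  isQprime Pol Q.
Proof.
move=> hg h0 hN h1 h2 [D [c [hf hQ]]] hc; exists D, c; split => // t u.
have [m [hm em]] := hc t u; exists m; split; last by rewrite em hf.
apply: (HC_ext _ hm) => x; rewrite (charac i0 hg h0 hN h1 h2); by [].
Qed.

Lemma upT_eq (F : finType) (a : F) : up a setT = setT :\ a.
Proof. by apply/setP => i; rewrite in_upT in_setD1 in_setT andbT. Qed.

Unset Implicit Arguments.

Theorem mainTheorem14 (E : finType) (r : {set E} -> nat)
  (hr : polymatroid r) (hE : (2 <= #|E|)%N) (a : E) (kmin kmax : int)
  (hmin : (exists p, basePolytope r p /\ p a = kmin%:~R) /\
          (forall p, basePolytope r p -> kmin%:~R <= p a))
  (hmax : (exists p, basePolytope r p /\ p a = kmax%:~R) /\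
          (forall p, basePolytope r p -> p a <= kmax%:~R)) :
  exists (QM Qdel Qcon : {poly {poly int}}) (QN : int -> {poly {poly int}}),
    isQprime (basePolytope r) QM /\
    isQprime (slicePolytope r a kmin) Qdel /\
    isQprime (slicePolytope r a kmax) Qcon /\
    (forall k : int, kmin <= k <= kmax -> isQprime (slicePolytope r a k) (QN k)) /\
    QM = Qx1 * Qdel + Qy1 * Qcon
         + \sum_(i < (`|kmax - kmin|%N).+1) QN (kmin + i%:Z).
Proof.
have hg := gr_submod hr.
have h0 : 0 <= gr r set0 by rewrite /gr.
have hN : (r setT)%:Z <= gr r setT by rewrite /gr.
have hcard : (0 < #|minus_pt a|)%N by rewrite card_sig cardC1; move: hE; case: #|E| => [|[|n]].
have [i0 _] : exists i0 : minus_pt a, i0 \in minus_pt a by apply/card_gt0P.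
set N := (r setT)%:Z.
set kmin0 := N - gr r (up a setT).
set kmax0 := gr r [set a].
have hk0 : kmin0 <= kmax0 by have := @factC E a (gr r) N hg h0 hN; rewrite /kmin0 /kmax0; lia.
have ex_lift : forall k, kmin0 <= k <= kmax0 ->
    exists p, basePolytope r p /\ p a = k%:~R.
  move=> k /andP[k1 k2].
  have [b hb] := exists_base i0 (gk_submod k hg) (gk_0 h0 k2) (gk_T hN k1).
  exists (fun i => (ext a k b i)%:~R); split; last by rewrite ext_a.
  apply: conv1; apply: lift_base hb; exact: k1.
have ekmin : kmin = kmin0.
  apply/eqP; rewrite eq_le; apply/andP; split.
    have [p [hp pa]] := ex_lift kmin0 ltac:(by rewrite lexx hk0).
    by have := hmin.2 p hp; rewrite pa ler_int.
  have [p [hp pa]] := hmin.1.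
  have [ps pS] := base_facts hp.
  have h := pS _ (@up_neqT E a setT).
  have e : \sum_i p i = p a + \sum_(i in up a setT) p i.
    by rewrite -sum_setT_rat (big_setD1 _ (in_setT a)) upT_eq.
  rewrite -(ler_int rat) -pa /kmin0 intrB; lra.
have ekmax : kmax = kmax0.
  apply/eqP; rewrite eq_le; apply/andP; split; last first.
    have [p [hp pa]] := ex_lift kmax0 ltac:(by rewrite lexx hk0).
    by have := hmax.2 p hp; rewrite pa ler_int.
  have [p [hp pa]] := hmax.1.
  have [ps pS] := base_facts hp.
  have na : [set a] != setT.
    apply/negP => /eqP e; move: hE; rewrite -cardsT -e cards1.
    by [].
  have := pS _ na; rewrite big_set1 pa ler_int; by [].
subst kmin kmax.
have slice_ok : forall k, kmin0 <= k <= kmax0 -> exists fq : (nat -> nat -> int) * {poly {poly int}},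
   Rep fq.1 fq.2 /\ forall t u, exists m : nat,
     HasCount (fun y : {ffun minus_pt a -> int} => Sset (gk a (gr r) k) (N - k) t u y) m /\ m%:Z = fq.1 t u.
  move=> k /andP[k1 k2].
  have [f [Q [hR hc]]] := @main_ind (#|minus_pt a|.-1) (minus_pt a) (esym (prednK hcard))
     (gk a (gr r) k) (N - k) (gk_submod k hg) (gk_0 h0 k2) (gk_T hN k1).
  by exists (f, Q).
have := @fchoice int ((nat -> nat -> int) * {poly {poly int}})
  (fun k p => kmin0 <= k <= kmax0 -> Rep p.1 p.2 /\ forall t u, exists m : nat,
     HasCount (fun y : {ffun minus_pt a -> int} => Sset (gk a (gr r) k) (N - k) t u y) m /\ m%:Z = p.1 t u).
case.
  move=> k; case: (boolP (kmin0 <= k <= kmax0)) => hk.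
    have [fq h] := slice_ok k hk; by exists fq.
  by exists ((fun _ _ => 0), 0) => hk'; exfalso; move/negP: hk.
move=> P hP.
have [fM [hRep hcnt]] := @step_rep E a (gr r) N (fun k => (P k).1) (fun k => (P k).2) hE hg h0 hN hP.
have slQ : forall k, kmin0 <= k <= kmax0 -> isQprime (slicePolytope r a k) (P k).2.
  move=> k hk; have [hR hc] := hP k hk; move/andP: hk => [k1 k2].
  apply: (isQ_of i0 (gk_submod k hg) (gk_0 h0 k2) (gk_T hN k1) _ _ hR hc).
    by move=> y /slice_facts.
  by move=> b hb; exact: slice_ii k1 hb.
exists (Qx1 * (P kmin0).2 + Qy1 * (P kmax0).2 +
   \sum_(l < (absz (kmax0 - kmin0)%R).+1) (P (kmin0 + l%:Z)).2), (P kmin0).2, (P kmax0).2, (fun k => (P k).2).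
split.
  apply: (isQ_of a hg h0 hN _ _ hRep hcnt); last exact: base_ii.
  by move=> y /base_facts.
split; first by apply: slQ; rewrite lexx hk0.
split; first by apply: slQ; rewrite lexx hk0 andbT.
split; first by move=> k hk; apply: slQ.
by [].
Qed.
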